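(* Let $G$ be a group and $\rho:(X,G)\to(Y,G)$ a factor map of topological dynamical systems which is an $n$-to-$1$ extension, with $(X,G)$ minimal. Suppose an abelian group $H$ acts continuously on $X$, commuting with the $G$-action, preserving the fibres of $\rho$ and acting transitively on each fibre. Suppose $(X,G)\xrightarrow{\rho'}(Z,G)\xrightarrow{\rho''}(Y,G)$ are factor maps with $\rho''\circ\rho'=\rho$. Then $(Z,G)$ is an $m$-to-$1$ extension of $(Y,G)$ (via $\rho''$) with $m$ dividing $n$, and there is a subgroup $H'\subset H$ such that (i) $H/H'$ acts continuously on $Z$, commuting with the $G$-action, preserving the fibres of $\rho''$ and acting transitively on each fibre; and (ii) $H'$, acting on $X$ by restriction of the $H$-action, preserves the fibres of $\rho'$ and acts transitively on each fibre.
   Context: A topological dynamical system $(X,G)$ is a compact Hausdorff space $X$ with a continuous action of $G$; it is minimal if every orbit is dense. A factor map is a continuous $G$-equivariant surjection. A factor map $\rho:(X,G)\to(Y,G)$ is an $n$-to-$1$ extension if every fibre $\rho^{-1}(y)$ has the same finite cardinality $n$. *)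

(* Defs.v *)
From HB Require Import structures.
From mathcomp Require Import all_boot all_order all_algebra.
From mathcomp Require Import monoid.
From mathcomp Require Import all_classical all_reals topology.
Set Implicit Arguments. Unset Strict Implicit. Unset Printing Implicit Defensive.
Import Order.TTheory GRing.Theory.
Local Open Scope classical_set_scope.

Definition is_tds (G : groupType) (X : topologicalType) (act : G -> X -> X) :=
  [/\ hausdorff_space X, compact [set: X],
      (forall x, act 1%g x = x),
      (forall g h x, act (g * h)%g x = act g (act h x)) &
      (forall g, continuous (act g))].

Definition minimal_tds (G : groupType) (X : topologicalType) (act : G -> X -> X) :=
  forall x : X, closure (range (fun g => act g x)) = [set: X].

Definition factor_map (G : groupType) (X Y : topologicalType)
  (actX : G -> X -> X) (actY : G -> Y -> Y) (f : X -> Y) :=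
  [/\ continuous f, (forall g x, f (actX g x) = actY g (f x)) & (forall y, exists x, f x = y)].

Definition n_to_1 (X Y : Type) (f : X -> Y) (n : nat) :=
  forall y : Y, card_eq (f @^-1` [set y]) `I_n.

Definition is_action (H : zmodType) (X : Type) (a : H -> X -> X) :=
  (forall x, a 0%R x = x) /\ (forall h k x, a (h + k)%R x = a h (a k x)).

(* the H-action a on X is continuous, commutes with the G-action, preserves
   the fibres of f and acts transitively on each fibre; the acting elements
   are restricted to the subset S of H (S = setT for the full action). *)
Definition fibre_transitive_on (G : groupType) (H : zmodType) (X Y : topologicalType)
  (actX : G -> X -> X) (a : H -> X -> X) (S : set H) (f : X -> Y) :=
  [/\ (forall h, S h -> continuous (a h)),
      (forall h g x, S h -> a h (actX g x) = actX g (a h x)),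
      (forall h x, S h -> f (a h x) = f x) &
      (forall x x', f x = f x' -> exists2 h, S h & a h x = x')].

Definition subgroup (H : zmodType) (S : set H) :=
  S 0%R /\ (forall h k, S h -> S k -> S (h - k)%R).

(* Main.v *)
Require Import Defs.
From HB Require Import structures.
From mathcomp Require Import all_boot all_order all_algebra.
From mathcomp Require Import monoid.
From mathcomp Require Import all_classical all_reals topology.
From mathcomp Require Import finmap.
Local Open Scope classical_set_scope.
Local Open Scope card_scope.

Lemma closed_eqfun (T U : topologicalType) (f g : T -> U) :
  hausdorff_space U -> continuous f -> continuous g ->
  closed [set x | f x = g x].
Proof.
move=> hU cf cg; apply/closure_id; apply/seteqP; split => [x|x cx].
  exact: subset_closure.
apply: hU => A B nA nB.
have : nbhs x (f @^-1` A `&` g @^-1` B).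
  by apply: filterI; [exact: cf | exact: cg].
move=> /cx [u [/= e [Au Bu]]]; exists (f u); split => //; by rewrite e.
Qed.

Lemma card_prod_fin (T U : choiceType) (A : set T) (B : set U) :
  finite_set A -> finite_set B ->
  A `*` B #= `I_(#|` fset_set A| * #|` fset_set B|)%N.
Proof.
move=> fA fB.
set sA := enum_fset (fset_set A); set sB := enum_fset (fset_set B).
have uA : uniq sA := fset_uniq _.
have uB : uniq sB := fset_uniq _.
have mA : forall x, (x \in sA) = (x \in A) by move=> x; exact: (in_fset_set fA).
have mB : forall x, (x \in sB) = (x \in B) by move=> x; exact: (in_fset_set fB).
pose f (p : T * U) := (index p.1 sA * size sB + index p.2 sB)%N.
have inj : {in A `*` B &, injective f}.
  move=> [x y] [x' y'] /set_mem [/= Ax By] /set_mem [/= Ax' By'] /= e.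
  have iy : (index y sB < size sB)%N by rewrite index_mem mB mem_set.
  have iy' : (index y' sB < size sB)%N by rewrite index_mem mB mem_set.
  have k0 : (0 < size sB)%N by case: (size sB) iy.
  have e1 := congr1 (fun t => t %/ size sB)%N e.
  have e2 := congr1 (fun t => t %% size sB)%N e.
  rewrite /f /= !divnMDl // !divn_small // !addn0 in e1.
  rewrite /f /= !modnMDl !modn_small // in e2.
  have xA : x \in sA by rewrite mA mem_set.
  have xA' : x' \in sA by rewrite mA mem_set.
  have yB : y \in sB by rewrite mB mem_set.
  have yB' : y' \in sB by rewrite mB mem_set.
  by rewrite -(nth_index x xA) -(nth_index x xA') e1 -(nth_index y yB) -(nth_index y yB') e2.
have img : f @` (A `*` B) = `I_(size sA * size sB)%N.
  apply/seteqP; split.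
    move=> _ [[x y] [/= Ax By] <-]; rewrite /f /=.
    have ix : (index x sA < size sA)%N by rewrite index_mem mA mem_set.
    have iy : (index y sB < size sB)%N by rewrite index_mem mB mem_set.
    rewrite /=; apply: (@leq_trans ((index x sA).+1 * size sB)).
      by rewrite mulSn addnC ltn_add2r.
    by rewrite leq_mul2r ix orbT.
  move=> i /= hi.
  have k0 : (0 < size sB)%N.
    by rewrite lt0n; apply/negP => /eqP k1; rewrite k1 muln0 in hi.
  have m0 : (0 < size sA)%N.
    by rewrite lt0n; apply/negP => /eqP k1; rewrite k1 mul0n in hi.
  have hq : (i %/ size sB < size sA)%N by rewrite ltn_divLR.
  have hr : (i %% size sB < size sB)%N by rewrite ltn_pmod.
  case EA: sA m0 hq => [//|x0 s] _ hq.
  case EB: sB k0 hr => [//|y0 t] _ hr.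
  exists (nth x0 sA (i %/ size sB), nth y0 sB (i %% size sB)).
    split => /=.
      by apply/set_mem; rewrite -mA EA mem_nth.
    by apply/set_mem; rewrite -mB EB mem_nth.
  rewrite /f /=.
  have -> : index (nth x0 sA (i %/ size sB)) sA = (i %/ size sB)%N.
    by apply: index_uniq; rewrite // EA.
  have -> : index (nth y0 sB (i %% size sB)) sB = (i %% size sB)%N.
    by apply: index_uniq; rewrite // EB.
  by rewrite -divn_eq.
by rewrite -img; apply: card_esym; exact: inj_card_eq inj.
Qed.

Theorem lemmaI2p14 (G : groupType) (H : zmodType) (X Y Z : topologicalType)
  (actX : G -> X -> X) (actY : G -> Y -> Y) (actZ : G -> Z -> Z)
  (rho : X -> Y) (rho' : X -> Z) (rho'' : Z -> Y) (n : nat) (a : H -> X -> X) :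
  is_tds actX -> is_tds actY -> is_tds actZ ->
  minimal_tds actX ->
  factor_map actX actY rho -> n_to_1 rho n ->
  is_action a -> fibre_transitive_on actX a setT rho ->
  factor_map actX actZ rho' -> factor_map actZ actY rho'' ->
  (forall x, rho'' (rho' x) = rho x) ->
  exists m : nat, [/\ n_to_1 rho'' m, (m %| n)%N &
    exists H' : set H, [/\ subgroup H',
      (* (i) an action of H/H', i.e. an action of H on Z trivial on H' *)
      (exists b : H -> Z -> Z, [/\ is_action b,
          (forall h z, H' h -> b h z = z) &
          fibre_transitive_on actZ b setT rho'']) &
      (* (ii) the restricted action of H' on X *)
      fibre_transitive_on actX a H' rho']].
Proof.
move=> tdsX tdsY tdsZ minX [rc req rsurj] nto1 [a0 aD]
  [acont acomm afib atr] [r'c r'eq r'surj] [r''c r''eq r''surj] comp.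
case: tdsZ => hZ cZ _ _ _.
have [[x0 _]|X0] := pselect (exists x : X, True); last first.
  have nX : forall x : X, False by move=> x; apply: X0; exists x.
  exists 1%N; split.
  - by move=> y; have [x _] := rsurj y; case: (nX x).
  - exact: dvd1n.
  exists setT; split.
  - by [].
  - exists (fun _ z => z); split => //.
    split => //; first by move=> h _ z; have [x _] := r'surj z; case: (nX x).
    by move=> z; have [x _] := r'surj z; case: (nX x).
  - split => [h _|h g x _|h x _|x x' _]; [exact: acont|case: (nX x)|case: (nX x)|case: (nX x)].
have K : forall h, (exists u, rho' (a h u) = rho' u) ->
    forall u, rho' (a h u) = rho' u.
  move=> h [u0 e] u.
  have cP : closed [set v | (rho' \o a h) v = rho' v].
    apply: closed_eqfun => // v; apply: continuous_comp; [exact: acont|exact: r'c].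
  have sub : range (fun g => actX g u0) `<=` [set v | (rho' \o a h) v = rho' v].
    by move=> _ [g _ <-]; rewrite /= acomm // !r'eq e.
  have : closure (range (fun g => actX g u0)) u by rewrite minX.
  by move=> /(closureS sub); rewrite -(closure_id _).1.
have ainv : forall k x, a (- k)%R (a k x) = x by move=> k x; rewrite -aD GRing.addNr a0.
have compat : forall h u v, rho' u = rho' v -> rho' (a h u) = rho' (a h v).
  move=> h u v e.
  have [k _ akv] : exists2 k, setT k & a k u = v by apply: atr; rewrite -!comp e.
  have Kk := K k (ex_intro _ u (etrans (f_equal rho' akv) (esym e))).
  by rewrite -akv -aD GRing.addrC aD Kk.
have trH : forall x x', rho x = rho x' -> exists h, a h x = x'.
  by move=> x x' /atr [h _ e]; exists h.
pose s z := xget x0 [set x | rho' x = z].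
have sP : forall z, rho' (s z) = z by move=> z; exact: (@xgetPex _ x0 [set x | rho' x = z] (r'surj z)).
pose H' := [set h | forall x, rho' (a h x) = rho' x].
pose b h z := rho' (a h (s z)).
have bE : forall h x, b h (rho' x) = rho' (a h x) by move=> h x; apply: compat; rewrite sP.
have fF : forall y, finite_set (rho @^-1` [set y]) by move=> y; apply/finite_setP; exists n.
have ZfE : forall x, rho'' @^-1` [set rho x] = rho' @` (rho @^-1` [set rho x]).
  move=> x; apply/seteqP; split => [z /= e|_ [u /= e <-]].
    exists (s z); last exact: sP.
    by rewrite /= -[rho (s z)]comp sP.
  by rewrite /= comp.
have fZ : forall x, finite_set (rho'' @^-1` [set rho x]).
  by move=> x; rewrite ZfE; apply: finite_image.
pose m := #|` fset_set (rho'' @^-1` [set rho x0])|.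
have Z0m : rho'' @^-1` [set rho x0] #= `I_m.
  by rewrite -(fset_setK (fZ x0)); exact/card_eq_fsetP.
pose sg z := xget 0%R [set h | rho' (a h x0) = z].
have sgP : forall z, rho'' z = rho x0 -> rho' (a (sg z) x0) = z.
  move=> z e; apply: (@xgetPex _ 0%R [set h | rho' (a h x0) = z]).
  have [h e'] : exists h, a h x0 = s z by apply: trH; rewrite -[rho (s _)]comp sP e.
  by exists h; rewrite /= e' sP.
have Kpair : forall h k x, rho' (a h x) = rho' (a k x) ->
    forall u, rho' (a h u) = rho' (a k u).
  move=> h k x e u.
  have K' := K (h - k)%R (ex_intro _ (a k x) _).
  rewrite -[in LHS](GRing.subrK k h) aD K' //.
  by rewrite -aD GRing.subrK.
have ainv' : forall k x, a k (a (- k)%R x) = x by move=> k x; rewrite -aD GRing.subrr a0.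
exists m; split.
- move=> y; have [x <-] := rsurj y.
  apply: card_eq_trans Z0m.
  pose phi z := rho' (a (sg z) x).
  have inj : {in rho'' @^-1` [set rho x0] &, injective phi}.
    move=> z z' /set_mem hz /set_mem hz' e.
    by rewrite -(sgP z hz) -(sgP z' hz'); exact: (Kpair _ _ x e x0).
  have -> : rho'' @^-1` [set rho x] = phi @` (rho'' @^-1` [set rho x0]).
    apply/seteqP; split => [z' /= e|_ [z hz <-]]; last first.
      by rewrite /= /phi comp afib.
    have [h e'] : exists h, a h x = s z' by apply: trH; rewrite -[rho (s _)]comp sP e.
    exists (rho' (a h x0)); first by rewrite /= comp afib.
    rewrite /phi (Kpair _ h x0 _ x) ?e' ?sP //.
    by rewrite sgP // comp afib.
  exact: inj_card_eq inj.
- pose C0 := rho @^-1` [set rho x0] `&` rho' @^-1` [set rho' x0].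
  have fC0 : finite_set C0 by apply: finite_setIl.
  pose psi (p : Z * X) := a (sg p.1) p.2.
  have inj : {in rho'' @^-1` [set rho x0] `*` C0 &, injective psi}.
    move=> [z u] [z' u'] /set_mem [/= hz [hu1 hu2]] /set_mem [/= hz' [hu1' hu2']] /= e.
    have ez : z = z'.
      rewrite -(sgP z hz) -(sgP z' hz') -(compat _ _ _ hu2) -(compat _ _ _ hu2').
      by move: e; rewrite /psi /= => ->.
    subst z'; congr (_, _).
    by move: e; rewrite /psi /= => e; rewrite -(ainv (sg z) u) e ainv.
  have img : psi @` (rho'' @^-1` [set rho x0] `*` C0) = rho @^-1` [set rho x0].
    apply/seteqP; split => [_ [[z u] [/= hz [hu1 hu2]] <-]|w /= hw].
      by rewrite /= /psi afib.
    have hz : rho'' (rho' w) = rho x0 by rewrite comp.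
    exists (rho' w, a (- sg (rho' w))%R w); last by rewrite /psi /= ainv'.
    split => //=; split => /=; first by rewrite afib.
    by rewrite -(compat _ _ _ (sgP _ hz)) ainv.
  have := @card_prod_fin _ _ _ _ (fZ x0) fC0; rewrite -/m.
  rewrite -(card_eql (inj_card_eq inj)) img => hF.
  have := card_eq_trans (card_esym (nto1 (rho x0))) hF.
  by move=> /card_eq_II ->; apply: dvdn_mulr.
exists H'; split.
- split => [x|h k Hh Hk x]; first by rewrite a0.
  by rewrite aD Hh -[in RHS](ainv' k x) Hk.
- exists b; split.
  + split => [z|h k z]; first by rewrite /b a0 sP.
    by rewrite [b k z]/b bE /b aD.
  + by move=> h z Hh; rewrite /b Hh sP.
  + split.
    * move=> h _; apply/continuous_closedP => C cC.
      have -> : b h @^-1` C = rho' @` ((rho' \o a h) @^-1` C).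
        apply/seteqP; split => [z /= Cz|_ [x /= Cx <-]].
          by exists (s z) => //.
        by rewrite /= bE.
      apply: compact_closed => //; apply: continuous_compact.
        by apply: continuous_subspaceT => x; exact: r'c.
      case: tdsX => _ cX _ _ _.
      apply: (subclosed_compact _ cX) => //.
      have chc : continuous (rho' \o a h).
        by move=> v; apply: continuous_comp; [exact: acont|exact: r'c].
      exact: (proj1 (continuous_closedP _) chc).
    * move=> h g z _.
      by rewrite -{1}(sP z) -r'eq bE acomm // r'eq.
    * by move=> h z _; rewrite /b comp afib // -[rho (s z)]comp sP.
    * move=> z z' e.
      have [h e'] : exists h, a h (s z) = s z' by apply: trH; rewrite -!comp !sP.
      by exists h => //; rewrite /b e' sP.
- split.
  + by move=> h _; exact: acont.
  + by move=> h g x _; exact: acomm.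
  + by move=> h x Hh; exact: Hh.
  + move=> x x' e.
    have [h e'] : exists h, a h x = x' by apply: trH; rewrite -!comp e.
    exists h => //; apply: K; exists x; by rewrite e' e.
Qed.
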